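(* Let $t_1$ and $t$ be the terms $t_1(x,y):=(x\wedge y)\vee(x\vee y)'$ and $t(x,y,z):=\Bigg(\bigg(\Big(\big((x\vee y)\wedge z\big)'\vee x\Big)\wedge(x\vee y)\bigg)'\vee x\Bigg)\wedge\Big(\big((x\vee y)\wedge z\big)'\vee y\Big)\wedge(x\vee y)$. Then the ideal terms $t_1\big(t(x_1,x_2,y_1)\vee t(x_3,x_4,y_2),\,x_2\vee x_4\big)$ (in $y_1,y_2$), $t_1\big(t(x_1,x_2,y_1)\wedge t(x_3,x_4,y_2),\,x_2\wedge x_4\big)$ (in $y_1,y_2$), $t_1\big((t(x_1,x_2,y))',\,x_2'\big)$ (in $y$), and the constant $1$ form a basis of ideal terms of $\mathcal V$: for every $\mathbf L\in\mathcal V$, a subset $I\subseteq L$ is an ideal of $\mathbf L$ if and only if $1\in I$ and $I$ is closed under each of the three listed ideal terms.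
   Context: $\mathcal V$ is the variety of algebras $(L,\vee,\wedge,{}',0,1)$ that are bounded lattices with a complementation $'$ (i.e. $x\vee x'\approx1$, $x\wedge x'\approx0$) satisfying the identities $x\vee y'\approx y'\vee\big((x\vee y')\wedge y\big)$ and $x\wedge y\approx x\wedge\big((x\wedge y)\vee x'\big)$. An ideal term in $y_1,\dots,y_m$ is a term $s(x_1,\dots,x_n,y_1,\dots,y_m)$ such that $\mathcal V$ satisfies $s(x_1,\dots,x_n,1,\dots,1)\approx1$. A subset $I\subseteq L$ is closed under such $s$ if $s(a_1,\dots,a_n,b_1,\dots,b_m)\in I$ for all $a_1,\dots,a_n\in L$ and $b_1,\dots,b_m\in I$. An ideal of $\mathbf L$ is a subset closed under all ideal terms (for the constant $1$, closedness means $1\in I$). A set $T$ of ideal terms is a basis of ideal terms if, for every $\mathbf L\in\mathcal V$, a subset of $L$ is an ideal iff it is closed under all terms of $T$. (These notions of ''ideal'' are not lattice ideals.) *)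

(* Defs.v *)
From mathcomp Require Import all_boot.

Set Implicit Arguments.
Unset Strict Implicit.
Unset Printing Implicit Defensive.

Record VAlg := {
  carrier :> Type;
  vjoin : carrier -> carrier -> carrier;
  vmeet : carrier -> carrier -> carrier;
  vcomp : carrier -> carrier;
  vzero : carrier;
  vone : carrier;
  joinC : forall x y, vjoin x y = vjoin y x;
  joinA : forall x y z, vjoin x (vjoin y z) = vjoin (vjoin x y) z;
  meetC : forall x y, vmeet x y = vmeet y x;
  meetA : forall x y z, vmeet x (vmeet y z) = vmeet (vmeet x y) z;
  joinKmeet : forall x y, vjoin x (vmeet x y) = x;
  meetKjoin : forall x y, vmeet x (vjoin x y) = x;
  join0 : forall x, vjoin x vzero = x;
  meet1 : forall x, vmeet x vone = x;
  join_comp : forall x, vjoin x (vcomp x) = vone;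
  meet_comp : forall x, vmeet x (vcomp x) = vzero;
  identity1 : forall x y,
    vjoin x (vcomp y) = vjoin (vcomp y) (vmeet (vjoin x (vcomp y)) y);
  identity2 : forall x y,
    vmeet x y = vmeet x (vjoin (vmeet x y) (vcomp x))
}.

Inductive term (V : Type) : Type :=
  | Var : V -> term V
  | TJoin : term V -> term V -> term V
  | TMeet : term V -> term V -> term V
  | TComp : term V -> term V
  | TZero : term V
  | TOne : term V.
Arguments TZero {V}.
Arguments TOne {V}.

Fixpoint eval (L : VAlg) (V : Type) (e : V -> L) (s : term V) : L :=
  match s with
  | Var v => e v
  | TJoin a b => vjoin (eval e a) (eval e b)
  | TMeet a b => vmeet (eval e a) (eval e b)
  | TComp a => vcomp (eval e a)
  | TZero => vzero L
  | TOne => vone L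
  end.

(* Assignment of x_1..x_n (inl) and y_1..y_m (inr). *)
Definition asg (L : VAlg) (n m : nat) (a : 'I_n -> L) (b : 'I_m -> L)
  (v : 'I_n + 'I_m) : L :=
  match v with inl i => a i | inr j => b j end.

Definition ideal_term (n m : nat) (s : term ('I_n + 'I_m)) : Prop :=
  forall (L : VAlg) (a : 'I_n -> L),
    eval (asg a (fun _ => vone L)) s = vone L.

Definition closed_under (L : VAlg) (I : L -> Prop) (n m : nat)
  (s : term ('I_n + 'I_m)) : Prop :=
  forall (a : 'I_n -> L) (b : 'I_m -> L),
    (forall j, I (b j)) -> I (eval (asg a b) s).

Definition is_ideal (L : VAlg) (I : L -> Prop) : Prop :=
  forall (n m : nat) (s : term ('I_n + 'I_m)),
    ideal_term s -> closed_under I s.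

Definition t1 (V : Type) (x y : term V) : term V :=
  TJoin (TMeet x y) (TComp (TJoin x y)).

Definition t (V : Type) (x y z : term V) : term V :=
  let xy := TJoin x y in
  let u := TComp (TMeet xy z) in
  TMeet (TMeet (TJoin (TComp (TMeet (TJoin u x) xy)) x) (TJoin u y)) xy.

Definition X4 (i : 'I_4) : term ('I_4 + 'I_2) := Var (inl i).
Definition Y2 (j : 'I_2) : term ('I_4 + 'I_2) := Var (inr j).
Definition o4_0 : 'I_4 := @Ordinal 4 0 isT.
Definition o4_1 : 'I_4 := @Ordinal 4 1 isT.
Definition o4_2 : 'I_4 := @Ordinal 4 2 isT.
Definition o4_3 : 'I_4 := @Ordinal 4 3 isT.
Definition o2_0 : 'I_2 := @Ordinal 2 0 isT.
Definition o2_1 : 'I_2 := @Ordinal 2 1 isT.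
Definition o1_0 : 'I_1 := @Ordinal 1 0 isT.

Definition basis_term1 : term ('I_4 + 'I_2) :=
  t1 (TJoin (t (X4 o4_0) (X4 o4_1) (Y2 o2_0)) (t (X4 o4_2) (X4 o4_3) (Y2 o2_1)))
     (TJoin (X4 o4_1) (X4 o4_3)).

Definition basis_term2 : term ('I_4 + 'I_2) :=
  t1 (TMeet (t (X4 o4_0) (X4 o4_1) (Y2 o2_0)) (t (X4 o4_2) (X4 o4_3) (Y2 o2_1)))
     (TMeet (X4 o4_1) (X4 o4_3)).

Definition basis_term3 : term ('I_2 + 'I_1) :=
  t1 (TComp (t (Var (inl o2_0)) (Var (inl o2_1)) (Var (inr o1_0))))
     (TComp (Var (inl o2_1))).

Definition basis_term0 : term ('I_0 + 'I_0) := TOne.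

(* Main.v *)
Require Import Defs.
From mathcomp Require Import all_boot.

Set Implicit Arguments.
Unset Strict Implicit.
Unset Printing Implicit Defensive.

Section Alg.
Variable L : VAlg.
Local Notation "x \v y" := (vjoin x y) (at level 50, left associativity).
Local Notation "x \m y" := (vmeet x y) (at level 40, left associativity).
Local Notation "x ^c" := (vcomp x) (at level 2).
Local Notation one := (vone L).
Local Notation zero := (vzero L).

Definition t1S (x y : L) : L := (x \m y) \v (x \v y)^c.
Definition tS (x y z : L) : L :=
  let b := x \v y in let u := (b \m z)^c in
  ((((u \v x) \m b)^c \v x) \m (u \v y)) \m b.

Lemma meetxx (x : L) : x \m x = x.
Proof. by rewrite -{2}(joinKmeet x x) meetKjoin. Qed.
Lemma joinxx (x : L) : x \v x = x.
Proof. by rewrite -{2}(meetKjoin x x) joinKmeet. Qed.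
Lemma one_meet (x : L) : one \m x = x.
Proof. by rewrite meetC meet1. Qed.
Lemma comp1 : one^c = zero.
Proof. by rewrite -(meet_comp one) one_meet. Qed.

Lemma le_join (a b : L) : a \m b = a -> a \v b = b.
Proof. move=> H; by rewrite -{1}H joinC meetC joinKmeet. Qed.
Lemma join_le (a b : L) : a \v b = b -> a \m b = a.
Proof. move=> H; by rewrite -H meetKjoin. Qed.
Lemma le_trans (a b c : L) : a \m b = a -> b \m c = b -> a \m c = a.
Proof. move=> H1 H2; by rewrite -H1 -meetA H2. Qed.

Lemma L2 (p x : L) : p \m x = p -> x \m (p \v x^c) = p.
Proof. move=> H. have := identity2 x p. by rewrite meetC H => <-. Qed.

Lemma L1 (y r : L) : y^c \v r = r -> r = y^c \v (r \m y).
Proof. move=> H. have := identity1 r y. by rewrite joinC H. Qed.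

Lemma compl_join (p x : L) : p \m x = p -> p^c \v x = one.
Proof.
move=> H.
have Hr : p^c \v (p^c \v x) = p^c \v x by rewrite joinA joinxx.
have E := L1 Hr.
have Hp : p \v (p^c \v x) = p^c \v x.
  by rewrite joinA (joinC p) -joinA (le_join H).
rewrite meetC (join_le Hp) in E.
by rewrite E joinC join_comp.
Qed.

Lemma m_le_x (x y : L) : (x \m y) \m x = x \m y.
Proof. by rewrite meetC meetA meetxx. Qed.
Lemma m_le_y (x y : L) : (x \m y) \m y = x \m y.
Proof. by rewrite -meetA meetxx. Qed.
Lemma x_le_b (x y : L) : x \m (x \v y) = x.
Proof. by rewrite meetKjoin. Qed.
Lemma y_le_b (x y : L) : y \m (x \v y) = y.
Proof. by rewrite joinC meetKjoin. Qed.

Lemma tS_1 (x y : L) : tS x y one = y.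
Proof.
rewrite /tS meet1.
have -> : ((x \v y)^c \v x) \m (x \v y) = x.
  by rewrite meetC (joinC (vcomp _) x); apply: L2; apply: x_le_b.
rewrite (joinC (vcomp x) x) join_comp one_meet meetC (joinC (vcomp _) y).
by apply: L2; apply: y_le_b.
Qed.

Lemma tS_t1 (x y : L) : tS x y (t1S x y) = x.
Proof.
rewrite /tS /t1S.
have Hm : (x \m y) \m (x \v y) = x \m y
  by apply: (le_trans (m_le_x x y)); apply: x_le_b.
rewrite (L2 Hm) (compl_join (m_le_x x y)) (compl_join (m_le_y x y)).
rewrite one_meet meet1 meetC (joinC (vcomp _) x).
by apply: L2; apply: x_le_b.
Qed.

Lemma t1S_xx (x : L) : t1S x x = one.
Proof. by rewrite /t1S meetxx joinxx join_comp. Qed.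
Lemma t1S_x1 (x : L) : t1S x one = x.
Proof.
have H : x \v one = one by rewrite -{1}(join_comp x) joinA joinxx join_comp.
by rewrite /t1S meet1 H comp1 join0. Qed.

End Alg.

Lemma evalB1 (L : VAlg) (e : 'I_4 + 'I_2 -> L) : eval e basis_term1 =
  t1S (vjoin (tS (e (inl o4_0)) (e (inl o4_1)) (e (inr o2_0)))
             (tS (e (inl o4_2)) (e (inl o4_3)) (e (inr o2_1))))
      (vjoin (e (inl o4_1)) (e (inl o4_3))).
Proof. by []. Qed.
Lemma evalB2 (L : VAlg) (e : 'I_4 + 'I_2 -> L) : eval e basis_term2 =
  t1S (vmeet (tS (e (inl o4_0)) (e (inl o4_1)) (e (inr o2_0)))
             (tS (e (inl o4_2)) (e (inl o4_3)) (e (inr o2_1))))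
      (vmeet (e (inl o4_1)) (e (inl o4_3))).
Proof. by []. Qed.
Lemma evalB3 (L : VAlg) (e : 'I_2 + 'I_1 -> L) : eval e basis_term3 =
  t1S (vcomp (tS (e (inl o2_0)) (e (inl o2_1)) (e (inr o1_0))))
      (vcomp (e (inl o2_1))).
Proof. by []. Qed.

Lemma it0 : ideal_term basis_term0. Proof. by []. Qed.
Lemma it1 : ideal_term basis_term1.
Proof. move=> L a; by rewrite evalB1 /= !tS_1 t1S_xx. Qed.
Lemma it2 : ideal_term basis_term2.
Proof. move=> L a; by rewrite evalB2 /= !tS_1 t1S_xx. Qed.
Lemma it3 : ideal_term basis_term3.
Proof. move=> L a; by rewrite evalB3 /= !tS_1 t1S_xx. Qed.

Definition f4 (L : Type) (c d c' d' : L) (k : 'I_4) : L :=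
  match val k with 0 => c | 1 => d | 2 => c' | _ => d' end.
Definition f2 (L : Type) (c d : L) (k : 'I_2) : L :=
  match val k with 0 => c | _ => d end.

Theorem theorem3 :
  ideal_term basis_term0 /\ ideal_term basis_term1 /\
  ideal_term basis_term2 /\ ideal_term basis_term3 /\
  forall (L : VAlg) (I : L -> Prop),
    is_ideal I <->
    (closed_under I basis_term0 /\ closed_under I basis_term1 /\
     closed_under I basis_term2 /\ closed_under I basis_term3).
Proof.
split; first exact: it0. split; first exact: it1.
split; first exact: it2. split; first exact: it3.
move=> L I; split.
  move=> HI; split; first exact: HI _ _ _ it0.
  split; first exact: HI _ _ _ it1.
  split; first exact: HI _ _ _ it2.
  exact: HI _ _ _ it3.
move=> [H0 [H1 [H2 H3]]] n m s Hs a b Hb.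
have I1 : I (vone L).
  have := H0 (fun _ => vone L) (fun _ => vone L).
  apply. by move=> [j hj].
have Hr : forall r, I (t1S (eval (asg a b) r) (eval (asg a (fun _ => vone L)) r)).
  elim=> [v|r1 IH1 r2 IH2|r1 IH1 r2 IH2|r1 IH1||] /=.
  - case: v => [i|j] /=; first by rewrite t1S_xx.
    by rewrite t1S_x1.
  - set c := eval _ r1 in IH1 *; set d := eval _ r1 in IH1 *.
    set c' := eval _ r2 in IH2 *; set d' := eval _ r2 in IH2 *.
    have := H1 (f4 c d c' d') (f2 (t1S c d) (t1S c' d')).
    rewrite evalB1 /= !tS_t1; apply.
    by move=> j; rewrite /f2; case: (val j).
  - set c := eval _ r1 in IH1 *; set d := eval _ r1 in IH1 *.
    set c' := eval _ r2 in IH2 *; set d' := eval _ r2 in IH2 *.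
    have := H2 (f4 c d c' d') (f2 (t1S c d) (t1S c' d')).
    rewrite evalB2 /= !tS_t1; apply.
    by move=> j; rewrite /f2; case: (val j).
  - set c := eval _ r1 in IH1 *; set d := eval _ r1 in IH1 *.
    have := H3 (f2 c d) (fun _ => t1S c d).
    rewrite evalB3 /= !tS_t1; apply.
    by move=> j.
  - by rewrite t1S_xx.
  - by rewrite t1S_xx.
have := Hr s. by rewrite Hs t1S_x1.
Qed.
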